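(* Let $u\in\mathcal H_k$, let $\Lambda\subset\mathcal H_k'$ satisfy $\sup_{\lambda\in\Lambda}\|v_\lambda\|_{\mathcal H_k}\le1$, and let $\lambda_1,\lambda_2,\dots$ be selected from $\Lambda$ by a PDE-$\beta$-greedy algorithm applied to $u$, with $r_i:=u-\Pi_{V(\Lambda_i)}(u)$. Then for $n=1,2,\dots$: (a) if $\beta\in[0,1]$: $$\Big[\prod_{i=n+1}^{2n}\sup_{\lambda\in\Lambda}|\lambda(r_i)|\Big]^{1/n}\le n^{-\beta/2}\,\|r_{n+1}\|_{\mathcal H_k}\,\Big[\prod_{i=n+1}^{2n}P_{\Lambda_i}(\lambda_{i+1})\Big]^{1/n};$$ (b) if $\beta\in(1,\infty)$: $$\Big[\prod_{i=n+1}^{2n}\sup_{\lambda\in\Lambda}|\lambda(r_i)|\Big]^{1/n}\le n^{-1/2}\,\|r_{n+1}\|_{\mathcal H_k}\,\Big[\prod_{i=n+1}^{2n}P_{\Lambda_i}(\lambda_{i+1})^{1/\beta}\Big]^{1/n}.$$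
   Context: $\mathcal H_k$ is the reproducing kernel Hilbert space of a kernel $k$; each $\lambda\in\mathcal H_k'$ has Riesz representer $v_\lambda$. For $\Lambda_i=\{\lambda_1,\dots,\lambda_i\}$ ($\Lambda_0=\emptyset$), $V(\Lambda_i)=\mathrm{span}\{v_\mu:\mu\in\Lambda_i\}$, $\Pi_{V(\Lambda_i)}$ the orthogonal projection, and $P_{\Lambda_i}(\lambda):=\|v_\lambda-\Pi_{V(\Lambda_i)}v_\lambda\|_{\mathcal H_k}$ the generalized power function. A PDE-$\beta$-greedy algorithm selects, for $\beta\in[0,\infty)$, $\lambda_{n+1}\in\arg\max_{\lambda\in\Lambda\setminus\Lambda_n,\ \lambda\neq0}|\lambda(u-\Pi_{V(\Lambda_n)}u)|^{\beta}\,P_{\Lambda_n}(\lambda)^{1-\beta}$, and for $\beta=\infty$, $\lambda_{n+1}\in\arg\max_{\lambda\in\Lambda\setminus\Lambda_n,\ \lambda\ne0}|\lambda(u-\Pi_{V(\Lambda_n)}u)|/P_{\Lambda_n}(\lambda)$ (maximizers assumed to exist). *)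

(* Defs.v *)
From HB Require Import structures.
From mathcomp Require Import all_boot all_order all_algebra.
From mathcomp Require Import all_classical all_reals all_analysis.
Set Implicit Arguments. Unset Strict Implicit. Unset Printing Implicit Defensive.
Import Order.TTheory GRing.Theory Num.Theory.
Local Open Scope classical_set_scope.
Local Open Scope ring_scope.

Section Defs.
Variables (R : realType) (V : lmodType R).

Definition is_inner_product (ip : V -> V -> R) : Prop :=
  [/\ forall x y, ip x y = ip y x,
      forall x y z, ip (x + y) z = ip x z + ip y z,
      forall (a : R) x y, ip (a *: x) y = a * ip x y,
      forall x, 0 <= ip x x
    & forall x, ip x x = 0 -> x = 0].

Variable ip : V -> V -> R.

Definition hnorm (x : V) : R := Num.sqrt (ip x x).

Definition in_span (s : seq V) (x : V) : Prop :=
  exists c : nat -> R, x = \sum_(i < size s) c i *: s`_i.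

Definition is_orth_proj (s : seq V) (u p : V) : Prop :=
  in_span s p /\ forall i, (i < size s)%N -> ip (u - p) s`_i = 0.

Definition orth_proj (s : seq V) (u : V) : V := xget 0 (is_orth_proj s u).

Variables (rep : (V -> R) -> V) (lam : nat -> (V -> R)).

Definition in_Lam_n (n : nat) (mu : V -> R) : Prop :=
  exists2 i, (1 <= i <= n)%N & mu = lam i.

(* Riesz representers of Lambda_n, spanning V(Lambda_n) *)
Definition reps_n (n : nat) : seq V := [seq rep (lam i) | i <- iota 1 n].

Definition proj_n (n : nat) (x : V) : V := orth_proj (reps_n n) x.

Definition power_fun (n : nat) (mu : V -> R) : R :=
  hnorm (rep mu - proj_n n (rep mu)).

Variable u : V.

Definition resid (n : nat) : V := u - proj_n n u.

Definition greedy_crit (beta : R) (n : nat) (mu : V -> R) : R :=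
  (`|mu (resid n)| `^ beta) * (power_fun n mu `^ (1 - beta)).

Definition is_PDE_beta_greedy (Lam : set (V -> R)) (beta : R) : Prop :=
  forall n : nat,
    [/\ Lam (lam n.+1), ~ in_Lam_n n (lam n.+1), lam n.+1 <> (fun _ => 0)
      & forall mu, Lam mu -> ~ in_Lam_n n mu -> mu <> (fun _ => 0) ->
          greedy_crit beta n mu <= greedy_crit beta n (lam n.+1)].

End Defs.

(* Main.v *)
Require Import Defs.
From HB Require Import structures.
From mathcomp Require Import all_boot all_order all_algebra.
From mathcomp Require Import all_classical all_reals all_analysis.
From mathcomp Require Import ring lra.
Set Implicit Arguments. Unset Strict Implicit. Unset Printing Implicit Defensive.
Import Order.TTheory GRing.Theory Num.Theory.
Local Open Scope classical_set_scope.
Local Open Scope ring_scope.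

Section IP.
Variables (R : realType) (V : lmodType R) (ip : V -> V -> R).
Hypothesis hip : is_inner_product ip.
Implicit Types (s : seq V) (x y z u p q py w : V).

Lemma ipC x y : ip x y = ip y x. Proof. by case: hip. Qed.
Lemma ipDl x y z : ip (x + y) z = ip x z + ip y z. Proof. by case: hip. Qed.
Lemma ipZl a x y : ip (a *: x) y = a * ip x y. Proof. by case: hip. Qed.
Lemma ip_ge0 x : 0 <= ip x x. Proof. by case: hip. Qed.
Lemma ip_eq0 x : ip x x = 0 -> x = 0. Proof. by case: hip => _ _ _ _; apply. Qed.
Lemma ipDr x y z : ip x (y + z) = ip x y + ip x z.
Proof. by rewrite ipC ipDl !(ipC x). Qed.
Lemma ipZr a x y : ip x (a *: y) = a * ip x y.
Proof. by rewrite ipC ipZl ipC. Qed.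
Lemma ip0l y : ip 0 y = 0.
Proof. by rewrite -(scale0r (0:V)) ipZl mul0r. Qed.
Lemma ip0r y : ip y 0 = 0.
Proof. by rewrite ipC ip0l. Qed.
Lemma ipNl x y : ip (- x) y = - ip x y.
Proof. by rewrite -scaleN1r ipZl mulN1r. Qed.
Lemma ipNr x y : ip y (- x) = - ip y x.
Proof. by rewrite ipC ipNl ipC. Qed.
Lemma ipBl x y z : ip (x - y) z = ip x z - ip y z.
Proof. by rewrite ipDl ipNl. Qed.
Lemma ipBr x y z : ip z (x - y) = ip z x - ip z y.
Proof. by rewrite ipDr ipNr. Qed.
Lemma ip_sumr x n (F : 'I_n -> V) : ip x (\sum_(i < n) F i) = \sum_(i < n) ip x (F i).
Proof.
elim: n F => [|n IH] F; first by rewrite !big_ord0 ip0r.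
by rewrite !big_ord_recr /= ipDr IH.
Qed.

Lemma CS x y : ip x y ^+ 2 <= ip x x * ip y y.
Proof.
have [x0|xn0] := eqVneq (ip x x) 0.
  by rewrite (ip_eq0 x0) !ip0l expr0n /= mul0r.
have xpos : 0 < ip x x by rewrite lt0r xn0 ip_ge0.
pose t := ip x y / ip x x.
have := ip_ge0 (y - t *: x).
rewrite !ipBl !ipBr !ipZl !ipZr (ipC y x) => h.
have e : ip y y - t * ip x y - (t * ip x y - t * (t * ip x x)) =
         ip y y - ip x y ^+ 2 / ip x x.
  rewrite /t; field; exact: xn0.
rewrite e subr_ge0 ler_pdivrMr // in h.
by rewrite mulrC.
Qed.

Lemma CSn x y : `|ip x y| <= hnorm ip x * hnorm ip y.
Proof.
rewrite /hnorm -sqrtrM ?ip_ge0 // -(sqrtr_sqr (ip x y)).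
by rewrite ler_sqrt ?CS // mulr_ge0 ?ip_ge0.
Qed.

Lemma hnorm_ge0 x : 0 <= hnorm ip x. Proof. exact: sqrtr_ge0. Qed.
Lemma hnorm_sqr x : hnorm ip x ^+ 2 = ip x x.
Proof. by rewrite /hnorm sqr_sqrtr ?ip_ge0. Qed.


Lemma span0 s : in_span s 0.
Proof. by exists (fun=> 0); rewrite big1 // => i _; rewrite scale0r. Qed.

Lemma spanD s x y : in_span s x -> in_span s y -> in_span s (x + y).
Proof.
move=> [c ->] [d ->]; exists (fun i => c i + d i).
by rewrite -big_split /=; apply: eq_bigr => i _; rewrite scalerDl.
Qed.

Lemma spanZ s a x : in_span s x -> in_span s (a *: x).
Proof.
move=> [c ->]; exists (fun i => a * c i).
by rewrite scaler_sumr; apply: eq_bigr => i _; rewrite scalerA.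
Qed.

Lemma spanB s x y : in_span s x -> in_span s y -> in_span s (x - y).
Proof. by move=> hx hy; apply: spanD => //; rewrite -scaleN1r; apply: spanZ. Qed.

Lemma span_rcons s y x a : in_span s x -> in_span (rcons s y) (x + a *: y).
Proof.
move=> [c ->]; exists (fun i => if (i < size s)%N then c i else a).
rewrite size_rcons big_ord_recr /= ltnn nth_rcons ltnn eqxx; congr (_ + _).
by apply: eq_bigr => i _; rewrite nth_rcons ltn_ord.
Qed.

Lemma orth_span s z x : (forall i, (i < size s)%N -> ip z s`_i = 0) ->
  in_span s x -> ip z x = 0.
Proof.
move=> h [c ->]; rewrite ip_sumr big1 // => i _.
by rewrite ipZr h ?mulr0.
Qed.

Lemma proj_rcons s u y p py :
  is_orth_proj ip s u p -> is_orth_proj ip s y py ->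
  ip (y - py) (y - py) != 0 ->
  is_orth_proj ip (rcons s y) u
    (p + (ip (u - p) (y - py) / ip (y - py) (y - py)) *: (y - py)).
Proof.
move=> [hp op] [hpy opy] nz.
set w := y - py; set c := _ / _.
have hs : forall i, (i < size s)%N -> ip (u - (p + c *: w)) s`_i = 0.
  move=> i hi; rewrite opprD addrA ipBl ipZl op // /w opy //.
  by rewrite mulr0 subrr.
split.
  have -> : p + c *: w = (p - c *: py) + c *: y.
    by rewrite /w scalerBr addrA addrAC.
  by apply: span_rcons; apply: spanB => //; apply: spanZ.
move=> i; rewrite size_rcons ltnS leq_eqVlt => /orP[/eqP ->|hi].
  rewrite nth_rcons ltnn eqxx.
  have -> : y = w + py by rewrite /w subrK.
  rewrite ipDr (orth_span hs hpy) addr0.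
  rewrite opprD addrA ipBl ipZl /c divfK //.
  by rewrite subrr.
by rewrite nth_rcons hi hs.
Qed.

Lemma proj_rcons0 s u y p py :
  is_orth_proj ip s u p -> is_orth_proj ip s y py ->
  ip (y - py) (y - py) = 0 -> is_orth_proj ip (rcons s y) u p.
Proof.
move=> [hp op] [hpy opy] z.
have ey : y = py by apply/eqP; rewrite -subr_eq0; apply/eqP; apply: ip_eq0.
split.
  by rewrite -[p]addr0 -(scale0r y); apply: span_rcons.
move=> i; rewrite size_rcons ltnS leq_eqVlt => /orP[/eqP ->|hi].
  by rewrite nth_rcons ltnn eqxx ey (orth_span op hpy).
by rewrite nth_rcons hi op.
Qed.

Lemma proj_ex s u : exists p, is_orth_proj ip s u p.
Proof.
elim/last_ind: s u => [|s y IH] u.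
  by exists 0; split; [apply: span0 | ].
have [p hp] := IH u; have [py hpy] := IH y.
have [z|nz] := eqVneq (ip (y - py) (y - py)) 0.
  by exists p; apply: (proj_rcons0 hp hpy z).
by eexists; apply: (proj_rcons hp hpy nz).
Qed.

Lemma proj_uniq s u p q : is_orth_proj ip s u p -> is_orth_proj ip s u q -> p = q.
Proof.
move=> [hp op] [hq oq].
have e : ip (p - q) (p - q) = 0.
  have -> : ip (p - q) (p - q) = ip (u - q) (p - q) - ip (u - p) (p - q).
    by rewrite -ipBl opprD opprK addrACA subrr add0r addrC.
  by rewrite (orth_span oq (spanB hp hq)) (orth_span op (spanB hp hq)) subrr.
by apply/eqP; rewrite -subr_eq0; apply/eqP; apply: ip_eq0.
Qed.

Lemma orth_projP s u : is_orth_proj ip s u (orth_proj ip s u).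
Proof. by apply: xgetPex; apply: proj_ex. Qed.

Lemma pyth a b : ip a b = 0 -> ip (a + b) (a + b) = ip a a + ip b b.
Proof.
move=> o; rewrite ipDl !ipDr o (ipC b a) o.
by rewrite addr0 add0r.
Qed.

Lemma ipBZ a b c : ip (a - c *: b) (a - c *: b) =
  ip a a - c * ip a b *+ 2 + c ^+ 2 * ip b b.
Proof.
rewrite ipBl !ipBr !ipZl !ipZr (ipC b a); ring.
Qed.

End IP.

Lemma powR_split (R : realType) (x b : R) : 0 <= x -> x = x `^ b * x `^ (1 - b).
Proof.
move=> x0; rewrite -powRD; first by rewrite addrC subrK powRr1.
by rewrite addrC subrK oner_eq0.
Qed.

Lemma powR_le_inv (R : realType) (x y b : R) : 0 <= x -> 0 <= y -> 0 < b ->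
  x `^ b <= y `^ b -> x <= y.
Proof.
move=> x0 y0 b0 h; rewrite leNgt; apply/negP => yx.
have := gt0_ltr_powR b0 y0 x0 yx.
by rewrite ltNge h.
Qed.
Section Greedy.
Variables (R : realType) (V : lmodType R) (ip : V -> V -> R).
Hypothesis hip : is_inner_product ip.
Variables (u : V) (Lam : set (V -> R)) (rep : (V -> R) -> V).
Hypothesis hrep : forall l, Lam l -> forall f : V, l f = ip (rep l) f.
Hypothesis hbound : forall l, Lam l -> hnorm ip (rep l) <= 1.
Variables (beta : R) (lam : nat -> (V -> R)).
Hypothesis hbeta : 0 <= beta.
Hypothesis hgreedy : is_PDE_beta_greedy ip rep lam u Lam beta.

Local Notation r i := (resid ip rep lam u i).
Local Notation d i := (ip (r i) (r i)).
Local Notation PP i := (proj_n ip rep lam i).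
Local Notation ww i := (rep (lam i.+1) - PP i (rep (lam i.+1))).

Lemma reps_S i : reps_n rep lam i.+1 = rcons (reps_n rep lam i) (rep (lam i.+1)).
Proof.
rewrite /reps_n (_ : iota 1 i.+1 = iota 1 (i + 1)); last by rewrite addn1.
by rewrite iotaD map_cat cats1 /= add1n.
Qed.

Lemma projP i x : is_orth_proj ip (reps_n rep lam i) x (PP i x).
Proof. exact: orth_projP. Qed.

Lemma lamLam j : (1 <= j)%N -> Lam (lam j).
Proof. by case: j => // j _; case: (hgreedy j). Qed.

Lemma r_orth_span i x : in_span (reps_n rep lam i) x -> ip x (r i) = 0.
Proof.
move=> hx; rewrite (ipC hip); apply: (orth_span hip _ hx).
by case: (projP i u).
Qed.

Lemma r_orth_lam i j : (1 <= j <= i)%N -> lam j (r i) = 0.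
Proof.
move=> /andP[j1 ji]; rewrite hrep; last exact: lamLam.
rewrite (ipC hip).
case: (projP i u) => _ /(_ j.-1); rewrite /reps_n size_map size_iota.
rewrite (nth_map 0%N) ?size_iota; last by case: j j1 ji.
rewrite nth_iota; last by case: j j1 ji.
rewrite add1n prednK //; apply; by case: j j1 ji.
Qed.

Lemma lam_r_eq l i : Lam l -> l (r i) = ip (rep l - PP i (rep l)) (r i).
Proof.
move=> hl; rewrite hrep // (ipBl hip) (@r_orth_span _ (PP i (rep l))) ?subr0 //.
by case: (projP i (rep l)).
Qed.

Lemma lam_r_le l i : Lam l -> `|l (r i)| <= power_fun ip rep lam i l * hnorm ip (r i).
Proof. by move=> hl; rewrite lam_r_eq //; apply: CSn. Qed.

Lemma power_le1 l i : Lam l -> power_fun ip rep lam i l <= 1.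
Proof.
move=> hl; apply: le_trans (hbound hl).
rewrite /power_fun /hnorm ler_sqrt ?(ip_ge0 hip) //.
set v := rep l; set pv := PP i v.
have o : ip (v - pv) pv = 0.
  by case: (projP i v) => hs ho; exact: (orth_span hip ho hs).
have := pyth hip o; rewrite subrK => ->.
by rewrite lerDl (ip_ge0 hip).
Qed.


Lemma proj_S i : PP i.+1 u =
  if ip (ww i) (ww i) == 0 then PP i u
  else PP i u + (ip (r i) (ww i) / ip (ww i) (ww i)) *: ww i.
Proof.
have h := projP i.+1 u; rewrite reps_S in h.
case: eqP => z.
  exact: (proj_uniq hip h (proj_rcons0 hip (projP i u) (projP i _) z)).
exact: (proj_uniq hip h (proj_rcons hip (projP i u) (projP i _) (introN eqP z))).
Qed.

Definition qq i := if ip (ww i) (ww i) == 0 then 0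
  else `|lam i.+1 (r i)| / hnorm ip (ww i).

Lemma a_eq i : lam i.+1 (r i) = ip (ww i) (r i).
Proof. by apply: lam_r_eq; apply: lamLam. Qed.

Lemma qq_ge0 i : 0 <= qq i.
Proof. by rewrite /qq; case: eqP => // _; rewrite divr_ge0 // hnorm_ge0. Qed.

Lemma hnorm_ww_gt0 i : ip (ww i) (ww i) != 0 -> 0 < hnorm ip (ww i).
Proof.
move=> nz; rewrite /hnorm sqrtr_gt0 lt0r nz /=; exact: ip_ge0.
Qed.

Lemma qqP i : qq i * power_fun ip rep lam i (lam i.+1) = `|lam i.+1 (r i)|.
Proof.
rewrite /qq /power_fun; case: eqP => z.
  by rewrite mul0r a_eq (ip_eq0 hip z) (ip0l hip) normr0.
by rewrite divfK // gt_eqF // hnorm_ww_gt0 //; apply/eqP.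
Qed.

Lemma qq_sq i : qq i ^+ 2 <= d i - d i.+1.
Proof.
have e : r i.+1 = if ip (ww i) (ww i) == 0 then r i
    else r i - (ip (r i) (ww i) / ip (ww i) (ww i)) *: ww i.
  by rewrite {1}/resid proj_S; case: eqP => _ //; rewrite opprD addrA.
rewrite /qq e; case: eqP => z; first by rewrite expr0n /= subrr.
set w := ww i; set c := ip (r i) w / ip w w.
rewrite (ipBZ hip).
rewrite expr_div_n real_normK ?num_real //.
rewrite hnorm_sqr // a_eq -/w (ipC hip w (r i)) /c.
rewrite le_eqVlt; apply/orP; left; apply/eqP.
by field; apply/eqP.
Qed.

Lemma d_mono i : d i.+1 <= d i.
Proof. by rewrite -subr_ge0; apply: le_trans (qq_sq i); apply: sqr_ge0. Qed.


Lemma power_ge0 i l : 0 <= power_fun ip rep lam i l.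
Proof. exact: hnorm_ge0. Qed.

Lemma trivial_cases i l : Lam l -> (in_Lam_n lam i l \/ l = (fun _ => 0)) -> l (r i) = 0.
Proof.
move=> hl [[j hj ->]|->] //; exact: r_orth_lam.
Qed.

Lemma greedy_le i l : Lam l -> ~ in_Lam_n lam i l -> l <> (fun _ => 0) ->
  greedy_crit ip rep lam u beta i l <= greedy_crit ip rep lam u beta i (lam i.+1).
Proof. by case: (hgreedy i) => _ _ _; apply. Qed.


Lemma bound_a i l : beta <= 1 -> Lam l ->
  `|l (r i)| <= qq i `^ beta * power_fun ip rep lam i (lam i.+1)
                * hnorm ip (r i) `^ (1 - beta).
Proof.
move=> b1 hl.
set P := power_fun ip rep lam i (lam i.+1).
have rhs0 : 0 <= qq i `^ beta * P * hnorm ip (r i) `^ (1 - beta).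
  by rewrite !mulr_ge0 ?powR_ge0 ?power_ge0.
have [hin|hnin] := pselect (in_Lam_n lam i l).
  by rewrite trivial_cases ?normr0 //; left.
have [h0|hn0] := pselect (l = (fun _ => 0)).
  by rewrite trivial_cases ?normr0 //; right.
have hc := greedy_le hl hnin hn0.
rewrite /greedy_crit -/P in hc.
have e : `|lam i.+1 (resid ip rep lam u i)| `^ beta * P `^ (1 - beta)
          = qq i `^ beta * P.
  rewrite -qqP -/P powRM ?qq_ge0 ?power_ge0 // -mulrA -powR_split //.
  exact: power_ge0.
rewrite e in hc.
set x := `|l (r i)|; set Pl := power_fun ip rep lam i l; set h := hnorm ip (r i).
have xle : x <= Pl * h by apply: lam_r_le.
rewrite {1}(@powR_split _ x beta); last exact: normr_ge0.
apply: (le_trans _ (ler_wpM2r (powR_ge0 _ _) hc)).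
rewrite -mulrA ler_wpM2l ?powR_ge0 // -powRM ?power_ge0 ?hnorm_ge0 //.
apply: ge0_ler_powR; rewrite ?nnegrE ?subr_ge0 ?mulr_ge0 ?power_ge0 ?hnorm_ge0 //.
exact: normr_ge0.
Qed.


Lemma bound_b i l : 1 < beta -> Lam l ->
  `|l (r i)| <= qq i * power_fun ip rep lam i (lam i.+1) `^ beta^-1.
Proof.
move=> b1 hl.
have b0 : 0 < beta by apply: lt_trans b1.
set P := power_fun ip rep lam i (lam i.+1).
set X := qq i * P `^ beta^-1.
have X0 : 0 <= X by rewrite mulr_ge0 ?powR_ge0 ?qq_ge0.
have [hin|hnin] := pselect (in_Lam_n lam i l).
  by rewrite trivial_cases ?normr0 //; left.
have [h0|hn0] := pselect (l = (fun _ => 0)).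
  by rewrite trivial_cases ?normr0 //; right.
have hc := greedy_le hl hnin hn0.
rewrite /greedy_crit -/P in hc.
have e : `|lam i.+1 (resid ip rep lam u i)| `^ beta * P `^ (1 - beta) = X `^ beta.
  rewrite -qqP -/P powRM ?qq_ge0 ?power_ge0 // /X powRM ?qq_ge0 ?powR_ge0 //.
  rewrite -mulrA; congr (_ * _).
  have [P0|Pn0] := eqVneq P 0.
    rewrite P0 powR0 ?gt_eqF // mul0r powR0 ?invr_neq0 ?gt_eqF //.
    by rewrite powR0 ?gt_eqF.
  rewrite -powR_split ?power_ge0 // -powRrM mulVf ?gt_eqF // powRr1 //.
  exact: power_ge0.
rewrite e in hc.
set x := `|l (r i)|; set Pl := power_fun ip rep lam i l.
have xle : x <= Pl * hnorm ip (r i) by apply: lam_r_le.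
have [Pl0|Pln0] := eqVneq Pl 0.
  by move: xle; rewrite Pl0 mul0r => xle; apply: le_trans xle X0.
apply: (powR_le_inv _ X0 b0); first exact: normr_ge0.
apply: le_trans hc.
rewrite -[X in X <= _]mulr1; apply: ler_wpM2l; first exact: powR_ge0.
have Plpos : 0 < Pl by rewrite lt0r Pln0 power_ge0.
rewrite -[X in X <= _](powRr0 Pl).
apply: ger_powR; first by rewrite Plpos power_le1.
by rewrite subr_le0 ltW.
Qed.

End Greedy.

Lemma prod_powR (R : realType) n (F : 'I_n -> R) (b : R) : (forall i, 0 <= F i) ->
  \prod_(i < n) F i `^ b = (\prod_(i < n) F i) `^ b.
Proof.
elim: n F => [|n IH] F hF; first by rewrite !big_ord0 powR1.
rewrite !big_ord_recr /= IH; last by move=> i; exact: hF.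
rewrite powRM //; try exact: hF.
by apply: prodr_ge0 => i _; exact: hF.
Qed.

Lemma agm_bound (R : realType) n (q : 'I_n -> R) (rho : R) : (0 < n)%N ->
  (forall i, 0 <= q i) -> \sum_(i < n) q i ^+ 2 <= rho ^+ 2 -> 0 <= rho ->
  \prod_(i < n) q i <= (rho * n%:R `^ (- (1 / 2))) ^+ n.
Proof.
move=> n0 hq hs hr.
have npos : (0 : R) < n%:R by rewrite ltr0n.
have c0 : 0 <= rho * n%:R `^ (- (1 / 2)) by rewrite mulr_ge0 ?powR_ge0.
have p0 : 0 <= \prod_(i < n) q i by apply: prodr_ge0 => i _; exact: hq.
rewrite -ler_sqr ?nnegrE ?exprn_ge0 //.
rewrite -prodrXl.
have := leif_AGM (A := [pred _ : 'I_n | true]) (E := fun i => q i ^+ 2).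
move=> /(_ (fun i _ => sqr_ge0 (q i))) [h _].
rewrite cardT /= size_enum_ord in h.
apply: (le_trans h).
rewrite -exprM mulnC exprM ler_pXn2r // ?nnegrE; first last.
- by rewrite exprn_ge0.
- by rewrite divr_ge0 ?ler0n // sumr_ge0 // => i _; exact: sqr_ge0.
rewrite exprMn -[_ `^ _ ^+ 2]powR_mulrn ?powR_ge0 // -powRrM.
rewrite (_ : - (1 / 2) * 2%:R = -1); last by rewrite mulNr div1r mulVf // pnatr_eq0.
rewrite powR_inv1 ?ler0n //.
by rewrite ler_pM2r ?invr_gt0 //.
Qed.

Lemma root_pow (R : realType) (c : R) n : 0 <= c -> (0 < n)%N ->
  (c ^+ n) `^ (n%:R^-1) = c.
Proof.
move=> c0 n0; rewrite -powR_mulrn // -powRrM mulfV ?powRr1 //.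
by rewrite pnatr_eq0 -lt0n.
Qed.

Lemma prod_q_root (R : realType) n (q : 'I_n -> R) (rho : R) : (0 < n)%N ->
  (forall i, 0 <= q i) -> \sum_(i < n) q i ^+ 2 <= rho ^+ 2 -> 0 <= rho ->
  (\prod_(i < n) q i) `^ (n%:R^-1) <= rho * n%:R `^ (- (1 / 2)).
Proof.
move=> n0 hq hs hr.
have c0 : 0 <= rho * n%:R `^ (- (1 / 2)) by rewrite mulr_ge0 ?powR_ge0.
rewrite -(root_pow c0 n0); apply: ge0_ler_powR; rewrite ?nnegrE ?invr_ge0 ?ler0n //.
- by apply: prodr_ge0 => i _; exact: hq.
- by rewrite exprn_ge0.
exact: agm_bound.
Qed.

Lemma final_a (R : realType) n (S q P : 'I_n -> R) (rho beta : R) :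
  (0 < n)%N -> 0 <= beta -> beta <= 1 -> 0 <= rho ->
  (forall i, 0 <= S i) -> (forall i, 0 <= q i) -> (forall i, 0 <= P i) ->
  (forall i, S i <= q i `^ beta * P i * rho `^ (1 - beta)) ->
  \sum_(i < n) q i ^+ 2 <= rho ^+ 2 ->
  (\prod_(i < n) S i) `^ (n%:R^-1) <=
  n%:R `^ (- (beta / 2)) * rho * (\prod_(i < n) P i) `^ (n%:R^-1).
Proof.
move=> n0 b0 b1 r0 hS hq hP hb hs.
have ni0 : 0 <= (n%:R : R)^-1 by rewrite invr_ge0 ler0n.
have Q0 : 0 <= \prod_(i < n) q i by apply: prodr_ge0 => i _; exact: hq.
have P0 : 0 <= \prod_(i < n) P i by apply: prodr_ge0 => i _; exact: hP.
apply: (@le_trans _ _ ((\prod_(i < n) (q i `^ beta * P i * rho `^ (1 - beta))) `^ (n%:R^-1))).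
  apply: ge0_ler_powR; rewrite ?nnegrE //.
  - by apply: prodr_ge0 => i _; exact: hS.
  - by apply: prodr_ge0 => i _; rewrite !mulr_ge0 ?powR_ge0.
  by apply: ler_prod => i _; rewrite hS hb.
rewrite !big_split /= prod_powR // prodr_const card_ord.
rewrite !powRM ?powR_ge0 ?exprn_ge0 ?mulr_ge0 //.
rewrite root_pow ?powR_ge0 // -powRAC.
have hA : (\prod_(i < n) q i) `^ (n%:R^-1) `^ beta <=
          (rho * n%:R `^ (- (1 / 2))) `^ beta.
  apply: ge0_ler_powR; rewrite ?nnegrE ?powR_ge0 ?mulr_ge0 ?powR_ge0 //.
  exact: prod_q_root.
apply: le_trans (ler_wpM2r (powR_ge0 _ _) (ler_wpM2r (powR_ge0 _ _) hA)) _.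
rewrite powRM ?powR_ge0 // -powRrM.
rewrite (_ : - (1 / 2) * beta = - (beta / 2)); last by rewrite mulNr mul1r mulrC.
rewrite le_eqVlt; apply/orP; left; apply/eqP.
  by rewrite [in RHS](powR_split beta r0); ring.
all: exact: powR_ge0.
Qed.

Lemma final_b (R : realType) n (S q P : 'I_n -> R) (rho beta : R) :
  (0 < n)%N -> 0 <= rho ->
  (forall i, 0 <= S i) -> (forall i, 0 <= q i) ->
  (forall i, S i <= q i * P i `^ beta^-1) ->
  \sum_(i < n) q i ^+ 2 <= rho ^+ 2 ->
  (\prod_(i < n) S i) `^ (n%:R^-1) <=
  n%:R `^ (- (1 / 2)) * rho * (\prod_(i < n) P i `^ beta^-1) `^ (n%:R^-1).
Proof.
move=> n0 r0 hS hq hb hs.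
have ni0 : 0 <= (n%:R : R)^-1 by rewrite invr_ge0 ler0n.
have Q0 : 0 <= \prod_(i < n) q i by apply: prodr_ge0 => i _; exact: hq.
have P0 : 0 <= \prod_(i < n) P i `^ beta^-1 by apply: prodr_ge0 => i _; exact: powR_ge0.
apply: (@le_trans _ _ ((\prod_(i < n) (q i * P i `^ beta^-1)) `^ (n%:R^-1))).
  apply: ge0_ler_powR; rewrite ?nnegrE //.
  - by apply: prodr_ge0 => i _; exact: hS.
  - by apply: prodr_ge0 => i _; rewrite !mulr_ge0 ?powR_ge0.
  by apply: ler_prod => i _; rewrite hS hb.
rewrite big_split /= powRM //.
apply: le_trans (ler_wpM2r (powR_ge0 _ _) (prod_q_root n0 hq hs r0)) _.
by rewrite [rho * _]mulrC.
Qed.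

Lemma prod_shift (R : realType) (F : nat -> R) n :
  \prod_(n.+1 <= i < (2 * n).+1) F i = \prod_(i < n) F (i + n.+1)%N.
Proof.
rewrite -{1}[n.+1]add0n big_addn big_mkord.
have -> : ((2 * n).+1 - n.+1 = n)%N by rewrite subSS mul2n -addnn addnK.
by [].
Qed.

Section Main.
Variables (R : realType) (V : lmodType R) (ip : V -> V -> R).
Hypothesis hip : is_inner_product ip.
Variables (u : V) (Lam : set (V -> R)) (rep : (V -> R) -> V).
Hypothesis hrep : forall l, Lam l -> forall f : V, l f = ip (rep l) f.
Hypothesis hbound : forall l, Lam l -> hnorm ip (rep l) <= 1.
Variables (beta : R) (lam : nat -> (V -> R)).
Hypothesis hbeta : 0 <= beta.
Hypothesis hgreedy : is_PDE_beta_greedy ip rep lam u Lam beta.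

Local Notation r i := (resid ip rep lam u i).
Local Notation d i := (ip (r i) (r i)).
Local Notation S i := (sup [set `|l (r i)| | l in Lam]).

Lemma sup_le i B : (forall l, Lam l -> `|l (r i)| <= B) -> 0 <= S i /\ S i <= B.
Proof.
move=> hB.
have l1 : Lam (lam 1) by apply: (lamLam hgreedy).
have ne : [set `|l (r i)| | l in Lam] !=set0 by exists `|lam 1 (r i)|; exists (lam 1).
have ub : ubound [set `|l (r i)| | l in Lam] B by move=> y [l hl <-]; apply: hB.
split; last exact: ge_sup.
apply: (le_trans (normr_ge0 (lam 1 (r i)))).
apply: ub_le_sup; first by exists B.
by exists (lam 1).
Qed.

Lemma dle j k : (j <= k)%N -> d k <= d j.
Proof.
move=> /subnK <-; elim: (k - j)%N => [|m IH]; first by rewrite add0n.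
by rewrite addSn; apply: le_trans IH; apply: (d_mono hip hrep hgreedy).
Qed.

Lemma hn_le i m : (m <= i)%N -> hnorm ip (r i) <= hnorm ip (r m).
Proof. by move=> h; rewrite /hnorm ler_sqrt ?ip_ge0 ?dle. Qed.

Lemma sum_qq m k : \sum_(i < k) qq ip u rep lam (i + m)%N ^+ 2 <= d m - d (k + m).
Proof.
elim: k => [|k IH]; first by rewrite big_ord0 add0n subrr.
rewrite big_ord_recr /=.
apply: le_trans (lerD IH (qq_sq hip hrep hgreedy (k + m)%N)) _.
by rewrite addSn addrA subrK.
Qed.

End Main.

Unset Implicit Arguments. Set Strict Implicit. Set Printing Implicit Defensive.

Theorem theorem4p6 (R : realType) (V : lmodType R) (ip : V -> V -> R)
  (hip : is_inner_product ip)
  (u : V) (Lam : set (V -> R)) (rep : (V -> R) -> V)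
  (hrep : forall l, Lam l -> forall f : V, l f = ip (rep l) f)
  (hbound : forall l, Lam l -> hnorm ip (rep l) <= 1)
  (beta : R) (hbeta : 0 <= beta) (lam : nat -> (V -> R))
  (hgreedy : is_PDE_beta_greedy ip rep lam u Lam beta) :
  forall n : nat, (0 < n)%N ->
    (beta <= 1 ->
      (\prod_(n.+1 <= i < (2 * n).+1)
          sup [set `|l (resid ip rep lam u i)| | l in Lam]) `^ (n%:R^-1)
      <= (n%:R `^ (- (beta / 2))) * hnorm ip (resid ip rep lam u n.+1)
         * (\prod_(n.+1 <= i < (2 * n).+1)
              power_fun ip rep lam i (lam i.+1)) `^ (n%:R^-1))
    /\
    (1 < beta ->
      (\prod_(n.+1 <= i < (2 * n).+1)
          sup [set `|l (resid ip rep lam u i)| | l in Lam]) `^ (n%:R^-1)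
      <= (n%:R `^ (- (1 / 2))) * hnorm ip (resid ip rep lam u n.+1)
         * (\prod_(n.+1 <= i < (2 * n).+1)
              (power_fun ip rep lam i (lam i.+1) `^ (beta^-1))) `^ (n%:R^-1)).
Proof.
move=> n n0.
set rho := hnorm ip (resid ip rep lam u n.+1).
have rho0 : 0 <= rho by apply: hnorm_ge0.
have hs : \sum_(i < n) qq ip u rep lam (i + n.+1)%N ^+ 2 <= rho ^+ 2.
  rewrite /rho hnorm_sqr //; apply: le_trans (sum_qq hip hrep hgreedy n.+1 n) _.
  by rewrite lerBlDr lerDl ip_ge0.
have hq : forall i : 'I_n, 0 <= qq ip u rep lam (i + n.+1)%N by move=> i; apply: qq_ge0.
split => hb.
  rewrite !prod_shift.
  apply: (final_a
    (S := fun i : 'I_n => sup [set `|l (resid ip rep lam u (i + n.+1)%N)| | l in Lam])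
    (q := fun i : 'I_n => qq ip u rep lam (i + n.+1)%N)
    (P := fun i : 'I_n => power_fun ip rep lam (i + n.+1)%N (lam (i + n.+1)%N.+1))) => //.
  - move=> i; exact: (proj1 (sup_le hgreedy (fun l (hl : Lam l) => bound_a hip hrep hgreedy (i + n.+1)%N hb hl))).
  - by move=> i; apply: power_ge0.
  move=> i; apply: le_trans.
    exact: (proj2 (sup_le hgreedy (fun l (hl : Lam l) => bound_a hip hrep hgreedy (i + n.+1)%N hb hl))).
  apply: ler_wpM2l; first by rewrite mulr_ge0 ?powR_ge0 ?power_ge0.
  apply: ge0_ler_powR; rewrite ?nnegrE ?subr_ge0 ?hnorm_ge0 //.
  by apply: (hn_le hip hrep hgreedy); rewrite leq_addl.
rewrite !prod_shift.
have b0 : 0 <= beta by apply: ltW; apply: lt_trans hb.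
apply: (final_b
    (S := fun i : 'I_n => sup [set `|l (resid ip rep lam u (i + n.+1)%N)| | l in Lam])
    (q := fun i : 'I_n => qq ip u rep lam (i + n.+1)%N)
    (P := fun i : 'I_n => power_fun ip rep lam (i + n.+1)%N (lam (i + n.+1)%N.+1))) => //.
- move=> i; exact: (proj1 (sup_le hgreedy (fun l (hl : Lam l) => bound_b hip hrep hbound hgreedy (i + n.+1)%N hb hl))).
move=> i; exact: (proj2 (sup_le hgreedy (fun l (hl : Lam l) => bound_b hip hrep hbound hgreedy (i + n.+1)%N hb hl))).
Qed.
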